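(* Let $S=\langle \underline{S},\sqcap,\sqcup,\Rightarrow,L,\neg,0,1\rangle$ be a rough algebra, and put $M(x)=\neg L(\neg x)$ for $x\in\underline{S}$. Define the binary relation $T$ on $\underline{S}$ by $(a,b)\in T$ if and only if there exists $c\in\underline{S}$ with $L(c)\le a\le M(c)$ and $L(c)\le b\le M(c)$ (where $\le$ is the lattice order of $\langle\underline{S},\sqcap,\sqcup\rangle$). Then $T$ is a compatible tolerance on $S$: it is reflexive and symmetric, and whenever $(a,b),(c,e)\in T$ we have $(a\sqcap c,\,b\sqcap e)\in T$ and $(a\sqcup c,\,b\sqcup e)\in T$.
   Context: A pre-rough algebra is an algebra $\langle\underline{S},\sqcap,\sqcup,\Rightarrow,L,\neg,0,1\rangle$ of type $(2,2,2,1,1,0,0)$ such that: $\langle\underline{S},\sqcap,\sqcup,\neg\rangle$ is a de Morgan lattice (with bounds $0,1$); $\neg\neg a=a$; $L(a)\sqcap a=L(a)$; $LL(a)=L(a)$; $L(1)=1$; $L(a\sqcap b)=L(a)\sqcap L(b)$; $\neg L\neg L(a)=L(a)$; $\neg L(a)\sqcup L(a)=1$; $L(a\sqcup b)=L(a)\sqcup L(b)$; if $L(a)\sqcap L(b)=L(a)$ and $\neg L(\neg(a\sqcap b))=\neg L(\neg a)$ then $a\sqcap b=a$; and $a\Rightarrow b=(\neg L(a)\sqcup L(b))\sqcap(L(\neg a)\sqcup\neg L(\neg b))$. A rough algebra is a completely distributive pre-rough algebra. The relation $T$ is called the coapproximability relation. *)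

(* Defs.v *)
Section RoughAlgebra.
Variable S : Type.
Variables (meet join imp : S -> S -> S) (L neg : S -> S) (zero one : S).

Definition lle (a b : S) : Prop := meet a b = a.

Definition is_de_morgan_lattice : Prop :=
  (forall a b c, meet a (meet b c) = meet (meet a b) c) /\
  (forall a b c, join a (join b c) = join (join a b) c) /\
  (forall a b, meet a b = meet b a) /\
  (forall a b, join a b = join b a) /\
  (forall a b, meet a (join a b) = a) /\
  (forall a b, join a (meet a b) = a) /\
  (forall a b c, meet a (join b c) = join (meet a b) (meet a c)) /\
  (forall a, join zero a = a) /\
  (forall a, meet one a = a) /\
  (forall a, neg (neg a) = a) /\
  (forall a b, neg (meet a b) = join (neg a) (neg b)) /\
  (forall a b, neg (join a b) = meet (neg a) (neg b)).

Definition is_pre_rough_algebra : Prop :=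
  is_de_morgan_lattice /\
  (forall a, neg (neg a) = a) /\
  (forall a, meet (L a) a = L a) /\
  (forall a, L (L a) = L a) /\
  L one = one /\
  (forall a b, L (meet a b) = meet (L a) (L b)) /\
  (forall a, neg (L (neg (L a))) = L a) /\
  (forall a, join (neg (L a)) (L a) = one) /\
  (forall a b, L (join a b) = join (L a) (L b)) /\
  (forall a b, meet (L a) (L b) = L a ->
               neg (L (neg (meet a b))) = neg (L (neg a)) ->
               meet a b = a) /\
  (forall a b, imp a b = meet (join (neg (L a)) (L b))
                              (join (L (neg a)) (neg (L (neg b))))).

Definition is_lub (X : S -> Prop) (s : S) : Prop :=
  (forall x, X x -> lle x s) /\ (forall u, (forall x, X x -> lle x u) -> lle s u).
Definition is_glb (X : S -> Prop) (s : S) : Prop :=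
  (forall x, X x -> lle s x) /\ (forall u, (forall x, X x -> lle u x) -> lle u s).

Definition is_complete_lattice : Prop :=
  (forall X : S -> Prop, exists s, is_lub X s) /\
  (forall X : S -> Prop, exists s, is_glb X s).

(* complete distributivity:
   /\_{i in I} \/_{j in J i} a i j = \/_{f in Prod_i J i} /\_{i in I} a i (f i) *)
Definition is_completely_distributive : Prop :=
  is_complete_lattice /\
  forall (I : Type) (J : I -> Type) (a : forall i, J i -> S)
         (l : I -> S) (m : S) (g : (forall i, J i) -> S),
    (forall i, is_lub (fun x => exists j, x = a i j) (l i)) ->
    is_glb (fun x => exists i, x = l i) m ->
    (forall f, is_glb (fun x => exists i, x = a i (f i)) (g f)) ->
    is_lub (fun x => exists f, x = g f) m.

Definition is_rough_algebra : Prop :=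
  is_pre_rough_algebra /\ is_completely_distributive.

Definition Mop (x : S) : S := neg (L (neg x)).

Definition Trel (a b : S) : Prop :=
  exists c, lle (L c) a /\ lle a (Mop c) /\ lle (L c) b /\ lle b (Mop c).

End RoughAlgebra.

(* Main.v *)
Require Import Defs.

Section H.
Variable S : Type.
Variables (meet join : S -> S -> S) (L neg : S -> S).
Hypothesis mA : forall a b c, meet a (meet b c) = meet (meet a b) c.
Hypothesis jA : forall a b c, join a (join b c) = join (join a b) c.
Hypothesis mC : forall a b, meet a b = meet b a.
Hypothesis jC : forall a b, join a b = join b a.
Hypothesis mJ : forall a b, meet a (join a b) = a.
Hypothesis jM : forall a b, join a (meet a b) = a.
Hypothesis nM : forall a b, neg (meet a b) = join (neg a) (neg b).
Hypothesis nJ : forall a b, neg (join a b) = meet (neg a) (neg b).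
Hypothesis Lle : forall a, meet (L a) a = L a.
Hypothesis LM : forall a b, L (meet a b) = meet (L a) (L b).
Hypothesis LJ : forall a b, L (join a b) = join (L a) (L b).

Notation le := (lle S meet).

Lemma le_join u v : le u v <-> join u v = v.
Proof.
  unfold lle; split; intro H.
  - rewrite <- H, jC, mC. apply jM.
  - rewrite <- H. apply mJ.
Qed.

Lemma meet_mono a c x y : le a x -> le c y -> le (meet a c) (meet x y).
Proof.
  unfold lle; intros H1 H2.
  assert (E : meet (meet a c) (meet x y) = meet (meet a x) (meet c y)).
  { rewrite !mA. f_equal. rewrite <- !mA. f_equal. apply mC. }
  rewrite E, H1, H2; reflexivity.
Qed.

Lemma join_mono a c x y : le a x -> le c y -> le (join a c) (join x y).
Proof.
  intros H1 H2; apply le_join in H1; apply le_join in H2; apply le_join.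
  assert (E : join (join a c) (join x y) = join (join a x) (join c y)).
  { rewrite !jA. f_equal. rewrite <- !jA. f_equal. apply jC. }
  rewrite E, H1, H2; reflexivity.
Qed.

Lemma neg_anti x y : le x y -> le (neg y) (neg x).
Proof.
  unfold lle; intro H. rewrite <- H. rewrite nM, jC. apply mJ.
Qed.

Lemma M_meet x y : Mop S L neg (meet x y) = meet (Mop S L neg x) (Mop S L neg y).
Proof. unfold Mop. rewrite nM, LJ, nJ. reflexivity. Qed.

Lemma M_join x y : Mop S L neg (join x y) = join (Mop S L neg x) (Mop S L neg y).
Proof. unfold Mop. rewrite nJ, LM, nM. reflexivity. Qed.

End H.

Theorem proposition2p1 (S : Type) (meet join imp : S -> S -> S)
  (L neg : S -> S) (zero one : S) :
  is_rough_algebra S meet join imp L neg zero one ->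
  let T := Trel S meet L neg in
  (forall a, T a a) /\
  (forall a b, T a b -> T b a) /\
  (forall a b c e, T a b -> T c e ->
     T (meet a c) (meet b e) /\ T (join a c) (join b e)).
Proof.
  intros [[[mA [jA [mC [jC [mJ [jM [_ [_ [_ [nn [nM nJ]]]]]]]]]]]
          [_ [Lle [_ [_ [LM [_ [_ [LJ _]]]]]]]]] _] T.
  split; [|split].
  - intro a. exists a.
    assert (H1 : lle S meet (L a) a) by apply Lle.
    assert (H2 : lle S meet a (Mop S L neg a)).
    { unfold Mop. pattern a at 1; rewrite <- (nn a). apply (neg_anti S meet join neg jC mJ nM).
      apply Lle. }
    tauto.
  - intros a b [c Hc]. exists c. tauto.
  - intros a b c e [d1 [h1 [h2 [h3 h4]]]] [d2 [k1 [k2 [k3 k4]]]]. split.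
    + exists (meet d1 d2). rewrite LM, (M_meet S meet join L neg nM nJ LJ).
      repeat split; eapply meet_mono; eauto.
    + exists (join d1 d2). rewrite LJ, (M_join S meet join L neg nM nJ LM).
      repeat split; eapply join_mono; eauto.
Qed.
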